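(* If $\sum_ir_ix_i\le f\le\sum_js_jy_j$ for positive simple functions $\sum_ir_ix_i$, $\sum_js_jy_j$ and $f\in R$, then $\sum_ir_ix_i\le\sum_js_jy_j$.
   Context: $R$ is a Riesz space over $\mathbb{Q}$ with strong unit $1$; rationals $r$ are identified with $r\cdot1$. $\mathrm{Spec}(R)$ is the distributive lattice generated by $D(a)$, $a\in R$, subject to $D(1)=1$; $D(a)\wedge D(-a)=0$; $D(a+b)\le D(a)\vee D(b)$; $D(a)=0$ if $a\le0$; $D(a\vee b)=D(a)\vee D(b)$. $B$ is the Boolean algebra freely generated by $\mathrm{Spec}(R)$; $(f>r):=D(f-r)$, $(f<r):=D(r-f)$, $(f\le r):=\neg(f>r)$, $(f\ge r):=\neg(f<r)$. A positive simple function is a formal finite sum $\sum_i r_ix_i$ with rationals $r_i\ge0$, $x_i\in B$; for a finite index set $I$, $x_I:=\bigwedge_{i\in I}x_i$ ($x_\emptyset=1$), $r_I:=\sum_{i\in I}r_i$ ($r_\emptyset=0$). Orders: $\sum_ir_ix_i\le\sum_js_jy_j$ iff for every finite index set $I$, $x_I\le\bigvee\{y_J: J \text{ finite index set with } r_I\le s_J\}$; $\sum_ir_ix_i\le f$ iff $x_I\le(f\ge r_I)$ for every finite $I$; $f\le\sum_js_jy_j$ iff $1=\bigvee_J((f\le s_J)\wedge y_J)$ over all finite index sets $J$. *)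

(* Defs.v *)
From HB Require Import structures.
From mathcomp Require Import all_boot all_order all_algebra.
Set Implicit Arguments. Unset Strict Implicit. Unset Printing Implicit Defensive.
Import Order.TTheory GRing.Theory Num.Theory.

Local Open Scope ring_scope.

(*   one    : the strong unit 1.  Rationals r are identified with r*:1 *)
Record riesz_axioms (V : lmodType rat) (le : rel V) (vmax : V -> V -> V)
    (one : V) : Prop := RieszAxioms {
  rz_refl  : forall a, le a a;
  rz_trans : forall a b c, le a b -> le b c -> le a c;
  rz_anti  : forall a b, le a b -> le b a -> a = b;
  rz_add   : forall a b c, le a b -> le (a + c) (b + c);
  rz_scale : forall (q : rat) a b, 0 <= q -> le a b -> le (q *: a) (q *: b);
  rz_max_l : forall a b, le a (vmax a b);
  rz_max_r : forall a b, le b (vmax a b);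
  rz_max_lub : forall a b c, le a c -> le b c -> le (vmax a b) c;
  rz_unit_pos : le 0 one;
  rz_strong_unit : forall a, exists n : nat,
      le a (n%:R *: one) /\ le (- (n%:R *: one)) a
}.

(* Syntax of elements of B: Boolean combinations of generators D(a). *)
Inductive bterm (V : Type) : Type :=
| BD of V
| BTop | BBot
| BMeet of bterm V & bterm V
| BJoin of bterm V & bterm V
| BNeg of bterm V.
Arguments BTop {V}. Arguments BBot {V}.

Fixpoint interp (V : Type) (d : Order.disp_t) (L : ctbDistrLatticeType d)
    (D : V -> L) (t : bterm V) : L :=
  match t with
  | BD a => D a
  | BTop => Order.top
  | BBot => Order.bottom
  | BMeet t1 t2 => Order.meet (interp D t1) (interp D t2)
  | BJoin t1 t2 => Order.join (interp D t1) (interp D t2)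
  | BNeg t1 => Order.compl (interp D t1)
  end.

Definition spec_rel (V : lmodType rat) (le : rel V) (vmax : V -> V -> V)
    (one : V) (d : Order.disp_t) (L : ctbDistrLatticeType d) (D : V -> L) : Prop :=
  [/\ D one = Order.top,
      forall a, Order.meet (D a) (D (- a)) = Order.bottom,
      forall a b, (D (a + b) <= Order.join (D a) (D b))%O,
      forall a, le a 0 -> D a = Order.bottom
    & forall a b, D (vmax a b) = Order.join (D a) (D b)].

(* Order of B, the Boolean algebra freely generated by Spec(R)
   (equivalently: presented by generators D(a) and the relations of Spec(R)):
   x <= y in B iff it holds under every interpretation satisfying the
   relations (the free algebra is itself such an interpretation). *)
Definition Ble (V : lmodType rat) (le : rel V) (vmax : V -> V -> V) (one : V)
    (x y : bterm V) : Prop :=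
  forall (d : Order.disp_t) (L : ctbDistrLatticeType d) (D : V -> L),
    spec_rel le vmax one D -> (interp D x <= interp D y)%O.

Definition Beq (V : lmodType rat) (le : rel V) (vmax : V -> V -> V) (one : V)
    (x y : bterm V) : Prop :=
  Ble le vmax one x y /\ Ble le vmax one y x.

Section Simple.
Variables (V : lmodType rat) (one : V).

Definition gtB (f : V) (r : rat) : bterm V := BD (f - r *: one).
Definition ltB (f : V) (r : rat) : bterm V := BD (r *: one - f).
Definition leB (f : V) (r : rat) : bterm V := BNeg (gtB f r).
Definition geB (f : V) (r : rat) : bterm V := BNeg (ltB f r).

Definition bigMeet (s : seq (bterm V)) : bterm V := foldr (@BMeet V) BTop s.
Definition bigJoin (s : seq (bterm V)) : bterm V := foldr (@BJoin V) BBot s.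

(* A positive simple function sum_i r_i x_i is given by n, r, x with
   index set 'I_n;  x_I and r_I for I a (finite) set of indices. *)
Definition xI n (x : 'I_n -> bterm V) (I : {set 'I_n}) : bterm V :=
  bigMeet [seq x i | i <- enum I].
Definition rI n (r : 'I_n -> rat) (I : {set 'I_n}) : rat :=
  \sum_(i in I) r i.
End Simple.

(* sum_i r_i x_i <= sum_j s_j y_j *)
Definition simple_le (V : lmodType rat) (le : rel V) (vmax : V -> V -> V)
    (one : V) n (r : 'I_n -> rat) (x : 'I_n -> bterm V)
    m (s : 'I_m -> rat) (y : 'I_m -> bterm V) : Prop :=
  forall I : {set 'I_n},
    Ble le vmax one (xI x I)
      (bigJoin [seq xI y J | J <- enum [set: {set 'I_m}] & rI r I <= rI s J]).

(* sum_i r_i x_i <= f *)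
Definition simple_le_elt (V : lmodType rat) (le : rel V) (vmax : V -> V -> V)
    (one : V) n (r : 'I_n -> rat) (x : 'I_n -> bterm V) (f : V) : Prop :=
  forall I : {set 'I_n}, Ble le vmax one (xI x I) (geB one f (rI r I)).

(* f <= sum_j s_j y_j *)
Definition elt_le_simple (V : lmodType rat) (le : rel V) (vmax : V -> V -> V)
    (one : V) (f : V) m (s : 'I_m -> rat) (y : 'I_m -> bterm V) : Prop :=
  Beq le vmax one BTop
    (bigJoin [seq BMeet (leB one f (rI s J)) (xI y J)
             | J <- enum [set: {set 'I_m}]]).

(* Main.v *)
Require Import Defs.
From HB Require Import structures.
From mathcomp Require Import all_boot all_order all_algebra.
Import Order.TTheory GRing.Theory Num.Theory.
Local Open Scope ring_scope.

Lemma interp_bigJoin_ge (V : lmodType rat) (d : Order.disp_t) (L : ctbDistrLatticeType d)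
  (D : V -> L) (T : eqType) (g : T -> bterm V) (l : seq T) z :
  z \in l -> (interp D (g z) <= interp D (bigJoin [seq g t | t <- l]))%O.
Proof.
elim: l => [|a l IH] //=; rewrite in_cons => /orP [/eqP -> | zl].
  by apply: lexU2; rewrite lexx.
by apply: lexU2; rewrite IH ?orbT.
Qed.

Lemma interp_bigJoin_meet (V : lmodType rat) (d : Order.disp_t) (L : ctbDistrLatticeType d)
  (D : V -> L) (T : eqType) (g : T -> bterm V) (l : seq T) (X Y : L) :
  (forall z, z \in l -> (Order.meet X (interp D (g z)) <= Y)%O) ->
  (Order.meet X (interp D (bigJoin [seq g t | t <- l])) <= Y)%O.
Proof.
elim: l => [|a l IH] H /=; first by rewrite meetx0 le0x.
rewrite meetUr leUx H ?mem_head //= IH // => z zl.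
by apply: H; rewrite in_cons zl orbT.
Qed.

Lemma D_mono (V : lmodType rat) (le : rel V) (vmax : V -> V -> V) (one : V)
   (d : Order.disp_t) (L : ctbDistrLatticeType d) (D : V -> L) :
  spec_rel le vmax one D -> forall a b, le (a - b) 0 -> (D a <= D b)%O.
Proof.
case=> _ _ Hadd H0 _ a b hab.
have -> : a = b + (a - b) by rewrite addrC subrK.
by apply: (le_trans (Hadd _ _)); rewrite (H0 (a - b)) // joinx0.
Qed.

Lemma D_muln (V : lmodType rat) (le : rel V) (vmax : V -> V -> V) (one : V)
   (d : Order.disp_t) (L : ctbDistrLatticeType d) (D : V -> L) :
  spec_rel le vmax one D -> forall a k, (D (a *+ k.+1) <= D a)%O.
Proof.
case=> _ _ Hadd _ _ a; elim=> [|k IH]; first by rewrite mulr1n.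
rewrite mulrS; apply: (le_trans (Hadd _ _)); by rewrite leUx lexx IH.
Qed.

Lemma D_pos (V : lmodType rat) (le : rel V) (vmax : V -> V -> V) (one : V)
   (HR : riesz_axioms le vmax one)
   (d : Order.disp_t) (L : ctbDistrLatticeType d) (D : V -> L) :
  spec_rel le vmax one D -> forall q : rat, 0 < q -> D (q *: one) = Order.top.
Proof.
move=> HD q q0.
have Hge1 : forall c : rat, 1 <= c -> D (c *: one) = Order.top.
  move=> c c1; apply/eqP; rewrite eq_le lex1 /=.
  case: HD => D1 _ Hadd H0 _.
  rewrite -D1.
  have E : one = c *: one + - ((c - 1) *: one).
    by rewrite scalerBl scale1r opprB addrC subrK.
  rewrite {1}E; apply: (le_trans (Hadd _ _)); rewrite (H0 (- _)) ?joinx0 //.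
  have c0 : 0 <= c - 1 by rewrite subr_ge0.
  have h1 := rz_scale HR c0 (rz_unit_pos HR).
  rewrite scaler0 in h1.
  have h2 := rz_add HR (- ((c - 1) *: one)) h1.
  by rewrite add0r subrr in h2.
set k := Num.Def.archi_bound q^-1.
have hk : q^-1 < k%:R by apply: archi_boundP; rewrite invr_ge0 ltW.
have kpos : (0 < k)%N.
  rewrite lt0n; apply/negP => /eqP k0; move: hk; rewrite k0 ltNge invr_ge0 ltW //.
have := @D_muln _ _ _ _ _ _ _ HD (q *: one) k.-1.
rewrite prednK // -scaler_nat scalerA (Hge1 (k%:R * q)); first by move=> h; apply/eqP; rewrite eq_le h lex1.
rewrite -(ltr_pM2r q0) mulVf ?lt0r_neq0 // in hk.
exact: ltW hk.
Qed.

Theorem lemma4p7 (V : lmodType rat) (le : rel V) (vmax : V -> V -> V) (one : V)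
    (HR : riesz_axioms le vmax one)
    (n : nat) (r : 'I_n -> rat) (x : 'I_n -> bterm V)
    (m : nat) (s : 'I_m -> rat) (y : 'I_m -> bterm V) (f : V)
    (hr : forall i, 0 <= r i) (hs : forall j, 0 <= s j)
    (H1 : simple_le_elt le vmax one r x f)
    (H2 : elt_le_simple le vmax one f s y) :
  simple_le le vmax one r x s y.
Proof.
move=> I d L D HD.
have h1 := H1 I d L D HD.
have h2 := (proj1 H2) d L D HD.
set X := interp D (xI x I).
have -> : X = Order.meet X Order.top by rewrite meetx1.
rewrite -[Order.top]/(interp D BTop).
apply: le_trans (leI2 (lexx X) h2) _.
apply: interp_bigJoin_meet => J _ /=.
case: (boolP (rI r I <= rI s J)) => hJ.
  rewrite meetA; apply: leIx2; apply/orP; right.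
  by apply: interp_bigJoin_ge; rewrite mem_filter hJ mem_enum in_setT.
rewrite meetA; apply: leIx2; apply/orP; left.
apply: le_trans (leI2 h1 (lexx _)) _ => /=.
rewrite -Order.CTBDistrLatticeTheory.complU.
have -> : (Order.join (D (rI r I *: one - f)) (D (f - rI s J *: one))) = Order.top.
  apply/eqP; rewrite eq_le lex1 /=.
  rewrite -(@D_pos _ _ _ _ HR _ _ _ HD (rI r I - rI s J)); last by rewrite subr_gt0 ltNge.
  case: HD => _ _ Hadd _ _.
  have -> : (rI r I - rI s J) *: one = (rI r I *: one - f) + (f - rI s J *: one).
    by rewrite scalerBl addrA subrK.
  exact: Hadd.
by rewrite Order.CTBDistrLatticeTheory.compl1 le0x.
Qed.
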